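(* Let $\{(\mathbf{x}_i,\mathbf{z}_i)\}_{i=1}^n$ be given covariate vectors $\mathbf{x}_i$ and linkage-related variables $\mathbf{z}_i$ from a linked file. Consider a generic record $(\mathbf{x},\mathbf{z},m,\mathbf{y})$, where $(\mathbf{x},\mathbf{z})$ is distributed according to the probability measure $P$ placing mass $1/n$ on each of $(\mathbf{x}_1,\mathbf{z}_1),\dots,(\mathbf{x}_n,\mathbf{z}_n)$; $m\in\{0,1\}$ is a mismatch indicator; and $\mathbf{y}$ is a response whose conditional density given $\mathbf{x}$ is $f(\mathbf{y}\mid\mathbf{x};\boldsymbol\theta)$ and which satisfies $\mathbf{y}\perp \mathbf{z}\mid \mathbf{x}$. Suppose the probability of a correct match satisfies $$\mathbf{P}(m=0\mid \mathbf{x},\mathbf{y},\mathbf{z};\boldsymbol\gamma)=\mathbf{P}(m=0\mid\mathbf{z};\boldsymbol\gamma)=h(\mathbf{z};\boldsymbol\gamma)$$ for a function $h$ taking values in $[0,1)$ on the $\mathbf{z}_i$ (so that $\sum_{k=1}^n(1-h(\mathbf{z}_k;\boldsymbol\gamma))>0$). Then the conditional density of $\mathbf{y}$ given $m=1$, evaluated at any point $\mathbf{y}_i$, is $$f(\mathbf{y}_i\mid m=1)=\sum_{j=1}^n \omega_j(\mathbf{z}_j;\boldsymbol\gamma)\, f(\mathbf{y}_i\mid \mathbf{x}_j;\boldsymbol\theta),\qquad 1\le i\le n,$$ where $$\omega_j(\mathbf{z}_j;\boldsymbol\gamma)=\frac{1-h(\mathbf{z}_j;\boldsymbol\gamma)}{\sum_{k=1}^n\bigl(1-h(\mathbf{z}_k;\boldsymbol\gamma)\bigr)},\qquad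 1\le j\le n.$$
   Context: Setting: post-linkage regression. A linked file consists of pairs $(\mathbf{x}_i,\mathbf{y}_i)$, $1\le i\le n$, with auxiliary variables $\mathbf{z}_i$ related to the record linkage process, and latent mismatch indicators $m_i$ ($m_i=0$ for a correct match, $m_i=1$ for a mismatch). The regression model of interest specifies the conditional density $f(\mathbf{y}\mid\mathbf{x};\boldsymbol\theta)$ with parameter $\boldsymbol\theta$; $\boldsymbol\gamma$ parametrizes the correct-match probability $h(\mathbf{z};\boldsymbol\gamma)=\mathbf{P}(m=0\mid\mathbf{z};\boldsymbol\gamma)$. The variables $\mathbf{x}$ and $\mathbf{z}$ may overlap or be dependent (including $\mathbf{x}=\mathbf{z}$). Notation: $f(\cdot\mid\cdot)$ denotes a (conditional) density of the random variables indicated by its arguments; $\perp$ denotes conditional independence. *)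

(* Defs.v *)
From HB Require Import structures.
From mathcomp Require Import all_boot all_order all_algebra.
From mathcomp Require Import all_classical all_reals all_analysis.
Set Implicit Arguments. Unset Strict Implicit. Unset Printing Implicit Defensive.
Import Order.TTheory GRing.Theory Num.Theory.
Local Open Scope classical_set_scope.
Local Open Scope ring_scope.

(* Empirical probability mass of the pair (x, z) under the measure placing
   mass 1/n on each of (xs i, zs i), i < n (duplicates accumulate mass). *)
Definition emp_mass (R : realType) (TX TZ : Type) (n : nat)
  (xs : 'I_n -> TX) (zs : 'I_n -> TZ) (x : TX) (z : TZ) : R :=
  (\sum_(i < n) (if `[< xs i = x /\ zs i = z >] then 1 else 0)) / n%:R.

Definition omega (R : realType) (TZ : Type) (n : nat)
  (h : TZ -> R) (zs : 'I_n -> TZ) (j : 'I_n) : R :=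
  (1 - h (zs j)) / (\sum_(k < n) (1 - h (zs k))).

(* g is (a version of) the conditional density, w.r.t. mu, of Y given the
   event E (which has positive probability):
   P(Y in B | E) = \int_B g dmu for every measurable B. *)
Definition is_cond_density (d dY : measure_display) (R : realType)
  (Omega : measurableType d) (TY : measurableType dY)
  (P : probability Omega R) (mu : {measure set TY -> \bar R})
  (Y : Omega -> TY) (E : set Omega) (g : TY -> R) : Prop :=
  (0 < P E)%E /\
  forall B : set TY, measurable B ->
    P (E `&` Y @^-1` B) = (P E * \int[mu]_(y in B) (g y)%:E)%E.

(* Main.v *)
Require Import Defs.
From HB Require Import structures.
From mathcomp Require Import all_boot all_order all_algebra.
From mathcomp Require Import all_classical all_reals all_analysis.
From mathcomp Require Import ring lra.
Import Order.TTheory GRing.Theory Num.Theory.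
Local Open Scope classical_set_scope.
Local Open Scope ring_scope.

Section Helpers.
Set Implicit Arguments. Unset Strict Implicit.

Definition kf (TX TZ : Type) n (xs : 'I_n -> TX) (zs : 'I_n -> TZ) (j : 'I_n) : 'I_n :=
  odflt j [pick i : 'I_n | `[< xs i = xs j /\ zs i = zs j >] ].

Lemma kfP (TX TZ : Type) n (xs : 'I_n -> TX) (zs : 'I_n -> TZ) j :
  xs (kf xs zs j) = xs j /\ zs (kf xs zs j) = zs j.
Proof.
rewrite /kf; case: pickP => [i /asboolP //|/(_ j)]; by rewrite asboolT.
Qed.

Lemma kfE (TX TZ : Type) n (xs : 'I_n -> TX) (zs : 'I_n -> TZ) i j :
  xs i = xs j -> zs i = zs j -> kf xs zs i = kf xs zs j.
Proof.
move=> ex ez; rewrite /kf.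
have -> : [pick l : 'I_n | `[< xs l = xs i /\ zs l = zs i >] ] = [pick l : 'I_n | `[< xs l = xs j /\ zs l = zs j >] ].
  by apply: eq_pick => l /=; rewrite ex ez.
case: pickP => // /(_ j); by rewrite asboolT.
Qed.

Lemma kfk (TX TZ : Type) n (xs : 'I_n -> TX) (zs : 'I_n -> TZ) j :
  kf xs zs (kf xs zs j) = kf xs zs j.
Proof. by case: (kfP xs zs j) => a b; apply: kfE. Qed.

Lemma kf_comb (R : ringType) (TX TZ : Type) n (xs : 'I_n -> TX) (zs : 'I_n -> TZ) (g : 'I_n -> R) :
  \sum_(i < n) (if kf xs zs i == i then \sum_(j < n) (if kf xs zs j == i then g j else 0) else 0)
  = \sum_(j < n) g j.
Proof.
rewrite -big_mkcond /=.
under eq_bigr => i _ do rewrite -big_mkcond /=.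
rewrite (exchange_big_dep xpredT) //=.
apply: eq_bigr => j _.
rewrite (bigD1 (kf xs zs j)) /=; last by rewrite kfk eqxx.
rewrite big1 ?addr0 // => i /andP[/andP[ki ji] ne].
by rewrite (eqP ji) eqxx in ne.
Qed.

Lemma decomp (d : measure_display) (R : realType) (Omega : measurableType d)
  (TX TZ : Type) (P : probability Omega R) (n : nat) (xs : 'I_n -> TX) (zs : 'I_n -> TZ)
  (X : Omega -> TX) (Z : Omega -> TZ)
  (hn : (0 < n)%N)
  (hXmeas : forall x, measurable [set w | X w = x])
  (hZmeas : forall z, measurable [set w | Z w = z])
  (hlaw : forall x z,
     P [set w | X w = x /\ Z w = z] = (emp_mass R xs zs x z)%:E)
  (C : set Omega) (mC : measurable C) :
  P C = (\sum_(i < n) (if kf xs zs i == i then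
            P (C `&` [set w | X w = xs i /\ Z w = zs i]) else 0))%E.
Proof.
set a := fun i : 'I_n => [set w | X w = xs i /\ Z w = zs i].
have ma : forall i, measurable (a i) by move=> i; exact: (measurableI _ _ (hXmeas (xs i)) (hZmeas (zs i))).
have _ := ma.
set F := fun i : 'I_n => if kf xs zs i == i then a i else set0.
have mF : forall i, measurable (F i) by move=> i; rewrite /F; case: ifP => _; [exact: ma|exact: measurable0].
have tF : forall C', trivIset setT (fun i => C' `&` F i).
  move=> C' i j _ _ [w [[_ Fi] [_ Fj]]].
  move: Fi Fj; rewrite /F; case: ifP => [/eqP ki|]; last by [].
  case: ifP => [/eqP kj|]; last by [].
  rewrite /a /= => -[xi zi] [xj zj].
  by rewrite -ki -kj; apply: kfE; rewrite -?xi -?xj -?zi -?zj.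
set A := \big[setU/set0]_(i < n) F i.
have mA : measurable A by apply: bigsetU_measurable => i _.
have CA : forall C', measurable C' -> P (C' `&` A) = (\sum_(i < n) P (C' `&` F i))%E.
  move=> C' mC'.
  have -> : C' `&` A = \big[setU/set0]_(i < n) (C' `&` F i).
    rewrite /A; elim/big_rec2: _ => [|i B1 B2 _ <-]; first by rewrite setI0.
    by rewrite setIUr.
  rewrite measure_bigsetU_ord //; first by move=> i; exact: measurableI.
have PA : P A = 1%E.
  rewrite -(setTI A) CA //.
  under eq_bigr => i _ do rewrite setTI.
  apply: (@eq_trans _ _ (\sum_(i < n) (if kf xs zs i == i then \sum_(j < n) (if kf xs zs j == i then n%:R^-1 else 0) else 0))%:E).
    rewrite -sumEFin; apply: eq_bigr => i _; rewrite /F.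
    case: ifP => [/eqP ki|_]; last by rewrite measure0.
    rewrite /a hlaw /emp_mass mulr_suml; congr EFin; apply: eq_bigr => j _.
    case: asboolP => [[ex ez]|nE].
      by rewrite (kfE ex ez) ki eqxx mul1r.
    case: eqP => [kj|_]; last by rewrite mul0r.
    by exfalso; apply: nE; case: (kfP xs zs j); rewrite kj.
  rewrite kf_comb sumr_const card_ord; congr EFin; rewrite -[X in X = _]mulr_natr mulVf //.
  by rewrite pnatr_eq0 -lt0n.
have Z0 : P (C `\` A) = 0%E.
  have h1 : P (~` A) = 0%E by rewrite probability_setC // PA subee.
  apply: (subset_measure0 (B := ~` A)).
  - exact: measurableD.
  - exact: measurableC.
  - by move=> w [].
  exact: h1.
apply: (@eq_trans _ _ (P (C `\` A) + P (C `&` A))%E); first exact: measureDI.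
rewrite Z0 add0e CA //; apply: eq_bigr => i _; rewrite /F; case: ifP => _ //.
by rewrite setI0 measure0.
Qed.

Lemma Pfin (d : measure_display) (R : realType) (Omega : measurableType d)
  (P : probability Omega R) (S : set Omega) : measurable S ->
  P S = (fine (P S))%:E.
Proof.
move=> mS; rewrite fineK // ge0_fin_numE ?measure_ge0 //.
by rewrite (le_lt_trans (probability_le1 P mS)) // ltry.
Qed.

Lemma emp_pos (R : realType) (TX TZ : Type) n (xs : 'I_n -> TX) (zs : 'I_n -> TZ) i :
  0 < emp_mass R xs zs (xs i) (zs i).
Proof.
rewrite /emp_mass divr_gt0 //; last by rewrite ltr0n (leq_ltn_trans (leq0n i) (ltn_ord i)).
rewrite (bigD1 i) //= asboolT // ltr_pwDl //.
by apply: sumr_ge0 => j _; case: ifP.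
Qed.

Lemma piece (d dY : measure_display) (R : realType)
  (Omega : measurableType d) (TY : measurableType dY)
  (TX TZ : Type)
  (P : probability Omega R) (mu : {measure set TY -> \bar R})
  (n : nat) (xs : 'I_n -> TX) (zs : 'I_n -> TZ)
  (X : Omega -> TX) (Z : Omega -> TZ) (M : Omega -> bool) (Y : Omega -> TY)
  (f : TY -> TX -> R) (h : TZ -> R)
  (hXmeas : forall x, measurable [set w | X w = x])
  (hZmeas : forall z, measurable [set w | Z w = z])
  (hMmeas : measurable [set w | M w])
  (hYmeas : measurable_fun setT Y)
  (hlaw : forall x z,
     P [set w | X w = x /\ Z w = z] = (emp_mass R xs zs x z)%:E)
  (hf_ge0 : forall y x, 0 <= f y x)
  (hdens : forall x (B : set TY), measurable B ->
     P [set w | X w = x /\ B (Y w)] =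
     (P [set w | X w = x] * \int[mu]_(y in B) (f y x)%:E)%E)
  (hci : forall x z (B : set TY), measurable B ->
     (P [set w | X w = x /\ Z w = z /\ B (Y w)] * P [set w | X w = x])%E =
     (P [set w | X w = x /\ B (Y w)] * P [set w | X w = x /\ Z w = z])%E)
  (hmatch : forall x z (B : set TY), measurable B ->
     P [set w | X w = x /\ Z w = z /\ B (Y w) /\ M w = false] =
     ((h z)%:E * P [set w | X w = x /\ Z w = z /\ B (Y w)])%E)
  (i : 'I_n) (B : set TY) (mB : measurable B) :
  exists J : R, (\int[mu]_(y in B) (f y (xs i))%:E)%E = J%:E /\
   P ([set w | M w] `&` Y @^-1` B `&` [set w | X w = xs i /\ Z w = zs i])
   = ((1 - h (zs i)) * emp_mass R xs zs (xs i) (zs i) * J)%:E.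
Proof.
have qpos := emp_pos R xs zs i.
move: qpos (hlaw (xs i) (zs i)) (hdens (xs i) B mB) (hci (xs i) (zs i) B mB) (hmatch (xs i) (zs i) B mB).
set x := xs i; set z := zs i; set q := emp_mass R xs zs x z.
move=> qpos Pa hd hc hm.
have mYB : measurable (Y @^-1` B) by rewrite -(setTI (Y @^-1` B)); exact: hYmeas.
have mX := hXmeas x. have mZ := hZmeas z.
have ma : measurable [set w | X w = x /\ Z w = z] := measurableI _ _ mX mZ.
have mXB : measurable [set w | X w = x /\ B (Y w)] := measurableI _ _ mX mYB.
have eS : [set w | X w = x /\ Z w = z /\ B (Y w)] = [set w | X w = x /\ Z w = z] `&` Y @^-1` B.
  by apply/seteqP; split => w /=; tauto.
have mS : measurable [set w | X w = x /\ Z w = z /\ B (Y w)] by rewrite eS; exact: measurableI.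
have pxq : q <= fine (P [set w | X w = x]).
  have := measureIl P mX mZ.
  rewrite -lee_fin -(Pfin P mX) -Pa; exact.
have pxpos : 0 < fine (P [set w | X w = x]) by exact: lt_le_trans pxq.
rewrite (Pfin P mX) (Pfin P mXB) in hd.
have J0 : (0 <= \int[mu]_(y in B) (f y x)%:E)%E.
  by apply: integral_ge0 => y _; rewrite lee_fin.
move: hd J0; case EJ: (\int[mu]_(y in B) (f y x)%:E)%E => [J| |] hd J0; last by [].
  2: by rewrite gt0_muley ?lte_fin // in hd.
exists J; split => //.
rewrite (Pfin P mS) (Pfin P mX) (Pfin P mXB) Pa hd -!EFinM in hc.
have {}hc := EFin_inj hc.
have sE : fine (P [set w | X w = x /\ Z w = z /\ B (Y w)]) = q * J.
  by apply: (mulIf (lt0r_neq0 pxpos)); rewrite hc; ring.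
set S := [set w | X w = x /\ Z w = z /\ B (Y w)].
set S' := [set w | X w = x /\ Z w = z /\ B (Y w) /\ M w = false].
set T := [set w | M w] `&` Y @^-1` B `&` [set w | X w = x /\ Z w = z].
have hD := measureDI P mS hMmeas.
have e1 : S `\` [set w | M w] = S'.
  apply/seteqP; split => w /=.
    by move=> [[xw [zw bw]] nm]; do !split => //; move/negP/negbTE: nm.
  by move=> [xw [zw [bw mf]]]; split; [by []| rewrite mf].
have e2 : S `&` [set w | M w] = T.
  apply/seteqP; split => w /=.
    by move=> [[xw [zw bw]] mw]; do !split.
  by move=> [[mw bw] [xw zw]]; do !split.
rewrite e1 e2 in hD.
have hD' : P S = (P S' + P T)%E := hD.
have mT : measurable T by apply: measurableI => //; exact: measurableI.
rewrite hm (Pfin P mS) (Pfin P mT) sE -EFinM -EFinD in hD'.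
have {}hD' := EFin_inj hD'.
rewrite (Pfin P mT); congr EFin; lra.
Qed.


Lemma emp_k (R : realType) (TX TZ : Type) n (xs : 'I_n -> TX) (zs : 'I_n -> TZ) i :
  kf xs zs i = i ->
  emp_mass R xs zs (xs i) (zs i) = \sum_(j < n) (if kf xs zs j == i then n%:R^-1 else 0).
Proof.
move=> ki; rewrite /emp_mass mulr_suml; apply: eq_bigr => j _.
case: asboolP => [[ex ez]|nE].
  by rewrite (kfE ex ez) ki eqxx mul1r.
case: eqP => [kj|_]; last by rewrite mul0r.
by exfalso; apply: nE; case: (kfP xs zs j); rewrite kj.
Qed.

Lemma sum_first (R : realType) (TX TZ : Type) n (xs : 'I_n -> TX) (zs : 'I_n -> TZ)
  (g : 'I_n -> R) : (forall j, g (kf xs zs j) = g j) ->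
  \sum_(i < n) (if kf xs zs i == i then g i * emp_mass R xs zs (xs i) (zs i) else 0)
  = \sum_(j < n) g j / n%:R.
Proof.
move=> gk; rewrite -[RHS](kf_comb xs zs); apply: eq_bigr => i _.
case: eqP => [ki|//]; rewrite emp_k // mulr_sumr; apply: eq_bigr => j _.
case: eqP => [kj|_]; last by rewrite mulr0.
by rewrite -kj gk.
Qed.

End Helpers.

Theorem lemma1 (d dY : measure_display) (R : realType)
  (Omega : measurableType d) (TY : measurableType dY)
  (TX TZ : Type)
  (P : probability Omega R) (mu : {measure set TY -> \bar R})
  (n : nat) (xs : 'I_n -> TX) (zs : 'I_n -> TZ)
  (X : Omega -> TX) (Z : Omega -> TZ) (M : Omega -> bool) (Y : Omega -> TY)
  (f : TY -> TX -> R) (h : TZ -> R)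
  (hn : (0 < n)%N)
  (hXmeas : forall x, measurable [set w | X w = x])
  (hZmeas : forall z, measurable [set w | Z w = z])
  (hMmeas : measurable [set w | M w])
  (hYmeas : measurable_fun setT Y)
  (* (X, Z) ~ empirical measure: mass 1/n on each (xs i, zs i) *)
  (hlaw : forall x z,
     P [set w | X w = x /\ Z w = z] = (emp_mass R xs zs x z)%:E)
  (* f(. | x) is a density (w.r.t. mu) of Y given X = x *)
  (hf_meas : forall x, measurable_fun setT (fun y => f y x))
  (hf_ge0 : forall y x, 0 <= f y x)
  (hdens : forall x (B : set TY), measurable B ->
     P [set w | X w = x /\ B (Y w)] =
     (P [set w | X w = x] * \int[mu]_(y in B) (f y x)%:E)%E)
  (* Y independent of Z given X *)
  (hci : forall x z (B : set TY), measurable B ->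
     (P [set w | X w = x /\ Z w = z /\ B (Y w)] * P [set w | X w = x])%E =
     (P [set w | X w = x /\ B (Y w)] * P [set w | X w = x /\ Z w = z])%E)
  (* P(m = 0 | x, y, z) = P(m = 0 | z) = h(z); m = 0 iff M w = false *)
  (hmatch : forall x z (B : set TY), measurable B ->
     P [set w | X w = x /\ Z w = z /\ B (Y w) /\ M w = false] =
     ((h z)%:E * P [set w | X w = x /\ Z w = z /\ B (Y w)])%E)
  (hh : forall i : 'I_n, 0 <= h (zs i) < 1) :
  is_cond_density P mu Y [set w | M w]
    (fun y => \sum_(j < n) omega h zs j * f y (xs j)).

Proof.
have mYB : forall B, measurable B -> measurable (Y @^-1` B).
  by move=> B mB; rewrite -(setTI (Y @^-1` B)); exact: hYmeas.
have pc : forall i B, measurable B ->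
   (\int[mu]_(y in B) (f y (xs i))%:E)%E = (fine (\int[mu]_(y in B) (f y (xs i))%:E))%:E /\
   P ([set w | M w] `&` Y @^-1` B `&` [set w | X w = xs i /\ Z w = zs i])
   = ((1 - h (zs i)) * emp_mass R xs zs (xs i) (zs i) * fine (\int[mu]_(y in B) (f y (xs i))%:E))%:E.
  move=> i B mB.
  have [J [e1 e2]] := piece hXmeas hZmeas hMmeas hYmeas hlaw hf_ge0 hdens hci hmatch i mB.
  by rewrite e1.
have J1 : forall i, fine (\int[mu]_(y in setT) (f y (xs i))%:E) = 1.
  move=> i; have [e1 _] := pc i setT measurableT.
  have hd := hdens (xs i) setT measurableT.
  have eX : [set w | X w = xs i /\ setT (Y w)] = [set w | X w = xs i].
    by apply/seteqP; split => w /= => [[]|] //.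
  rewrite eX e1 (Pfin P (hXmeas _)) -EFinM in hd.
  have {}hd := EFin_inj hd.
  have pxq : emp_mass R xs zs (xs i) (zs i) <= fine (P [set w | X w = xs i]).
    have := measureIl P (hXmeas (xs i)) (hZmeas (zs i)).
    rewrite -lee_fin -(Pfin P (hXmeas _)) -hlaw; exact.
  have pxpos : 0 < fine (P [set w | X w = xs i]) by exact: lt_le_trans (emp_pos R xs zs i) pxq.
  apply: (mulfI (lt0r_neq0 pxpos)); by rewrite mulr1 -hd.
have key : forall B, measurable B -> P ([set w | M w] `&` Y @^-1` B) =
    (\sum_(j < n) (1 - h (zs j)) * fine (\int[mu]_(y in B) (f y (xs j))%:E) / n%:R)%:E.
  move=> B mB.
  rewrite (decomp hn hXmeas hZmeas hlaw (measurableI _ _ hMmeas (mYB B mB))).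
  rewrite -(@sum_first R TX TZ n xs zs ( fun j => (1 - h (zs j)) * fine (\int[mu]_(y in B) (f y (xs j))%:E))); last first.
    by move=> j; case: (kfP xs zs j) => -> ->.
  rewrite -sumEFin; apply: eq_bigr => i _; case: ifP => _ //.
  by rewrite (pc i B mB).2; congr EFin; ring.
have PM : P [set w | M w] = (\sum_(j < n) (1 - h (zs j)) / n%:R)%:E.
  have -> : [set w | M w] = [set w | M w] `&` Y @^-1` setT by rewrite preimage_setT setIT.
  rewrite key //; congr EFin; apply: eq_bigr => j _; by rewrite J1 mulr1.
set S := \sum_(k < n) (1 - h (zs k)).
have Spos : 0 < S.
  rewrite /S (bigD1 (Ordinal hn)) //=.
  have := hh (Ordinal hn); move/andP => [_ h1].
  have : 0 <= \sum_(i < n | i != Ordinal hn) (1 - h (zs i)).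
    apply: sumr_ge0 => j _; have := hh j; move/andP => [_ h2]; lra.
  lra.
have n0 : (n%:R : R) != 0 by rewrite pnatr_eq0 -lt0n.
split.
  by rewrite PM lte_fin -mulr_suml divr_gt0 // ltr0n.
move=> B mB.
rewrite key // PM.
have -> : (\int[mu]_(y in B) (\sum_(j < n) omega h zs j * f y (xs j))%:E)%E
    = (\sum_(j < n) omega h zs j * fine (\int[mu]_(y in B) (f y (xs j))%:E))%:E.
  have om0 : forall j, 0 <= omega h zs j.
    move=> j; rewrite /omega -/S divr_ge0 //; last exact: ltW.
    by have := hh j; move/andP => [_ h2]; lra.
  rewrite -sumEFin.
  under eq_integral => y _ do rewrite -sumEFin.
  rewrite ge0_integral_sum //; last first.
  - by move=> j y _; rewrite lee_fin mulr_ge0.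
  - move=> j; apply/measurable_realfun.measurable_EFinP.
    exact: (measurable_realfun.measurable_funM (measurable_cst _) (measurable_funTS (hf_meas _))).
  apply: eq_bigr => j _.
  under eq_integral => y _ do rewrite EFinM.
  rewrite ge0_integralZl_EFin //.
  - by rewrite [RHS]EFinM; congr mule; exact: (pc j B mB).1.
  - by move=> y _; rewrite lee_fin.
  - apply/measurable_realfun.measurable_EFinP; exact: measurable_funTS.
rewrite -EFinM; congr EFin; rewrite -[X in _ = X * _]mulr_suml -/S mulr_sumr; apply: eq_bigr => j _.
rewrite /omega -/S; field.
by rewrite n0 lt0r_neq0.
Qed.
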